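(* In the truncated Gale–Shapley algorithm described in the context, with a weight function $w$ respecting the preferences, for every $i\ge 2$ we have $f_i(R)\le w(L_i)-w(L_{i-1})$.
   Context: Instance: a simple bipartite graph $\mathcal{G}=(R\cup B,E)$ (red nodes $R$, blue nodes $B$) without isolated nodes, each node having a linear preference order on its neighbours. Algorithm (distributed Gale–Shapley): each blue $b$ keeps $p(b)$ (current partner or $\bot$), initially $\bot$. Each red $r$ keeps a list $C(r)$, initially all neighbours in decreasing preference; $c(r)$ (candidate awaiting response, or $\bot$), initially $\bot$; $p(r)$ (partner or $\bot$), initially $\bot$. Each round consists of a blue turn then a red turn. Blue turn, for each $b$: let $P$ be the set of neighbours that sent `propose'; if $P=\emptyset$ do nothing. Otherwise let $Q=P\cup\{p(b)\}$ if $p(b)\ne\bot$, else $Q=P$; let $q$ be $b$'s most preferred node in $Q$; if $q\ne p(b)$, send `break' to $p(b)$ (if $p(b)\ne\bot$), send `accept' to $q$, and set $p(b)\gets q$; send `reject' to every $r\in P\setminus\{q\}$. Red turn, for each $r$: (1) if $c(r)\neq\bot$, receive the message from $c(r)$; if `accept' set $p(r)\gets c(r)$; if `reject' remove $c(r)$ from $C(r)$; then set $c(r)\gets\bot$. (2) If $p(r)\ne\bot$ and $p(r)$ sent `break', remove $p(r)$ from $C(r)$ and set $p(r)\gets\bot$. (3) If $p(r)=\bot$ and $C(r)$ is nonempty, set $c(r)$ to the first element of $C(r)$ and send `propose' to it. Notation: a subscript $i$ denotes the value at the end of round $i$. An edge $\{r,b\}$ is lost when $r$ removes $b$ from $C(r)$;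 $L_i\subseteq E$ is the set of edges lost by the end of round $i$. Let $w:E\to\mathbb{Z}_{>0}$ be a weight function respecting preferences: whenever a node $v$ prefers $x$ over $y$, $w(\{v,x\})\ge w(\{v,y\})$; $w(F)=\sum_{e\in F}w(e)$. The potential of $r\in R$ at the end of round $i$ is $f_i(r)=0$ if $r$ is matched ($p_i(r)\neq\bot$) or $C_i(r)$ is empty, and otherwise $f_i(r)=w(\{r,b\})$ where $b$ is the first element of $C_i(r)$; $f_i(R)=\sum_{r\in R}f_i(r)$. *)

(* Defs.v *)
From mathcomp Require Import all_boot all_order.
Set Implicit Arguments. Unset Strict Implicit. Unset Printing Implicit Defensive.

(* The preference of a node v is given by a duplicate-free list of exactly its
   neighbours, in DECREASING order of preference. *)

Section GS.
Variables (R B : finType) (adj : R -> B -> bool)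
          (prefR : R -> seq B) (prefB : B -> seq R).

Definition pref_ok : Prop :=
  (forall r, uniq (prefR r) /\ forall b, (b \in prefR r) = adj r b) /\
  (forall b, uniq (prefB b) /\ forall r, (r \in prefB b) = adj r b).

Definition no_isolated : Prop :=
  (forall r, exists b, adj r b) /\ (forall b, exists r, adj r b).

Definition prefersR (r : R) (b1 b2 : B) : bool :=
  [&& b1 \in prefR r, b2 \in prefR r & index b1 (prefR r) < index b2 (prefR r)].
Definition prefersB (b : B) (r1 r2 : R) : bool :=
  [&& r1 \in prefB b, r2 \in prefB b & index r1 (prefB b) < index r2 (prefB b)].

Definition weight_ok (w : R -> B -> nat) : Prop :=
  (forall r b, adj r b -> 0 < w r b) /\
  (forall r b1 b2, prefersR r b1 b2 -> w r b2 <= w r b1) /\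
  (forall b r1 r2, prefersB b r1 r2 -> w r2 b <= w r1 b).

Record state := State {
  pB : B -> option R;
  C  : R -> seq B;
  cR : R -> option B;
  pR : R -> option B
}.

Definition init : state :=
  State (fun _ => None) prefR (fun _ => None) (fun _ => None).

Section Round.
Variable s : state.

(* Blue turn: P = set of red nodes that sent 'propose' to b (during the
   previous red turn, i.e. those r with c(r) = b). *)
Definition Pset (b : B) : {set R} := [set r | cR s r == Some b].
Definition Qset (b : B) : {set R} :=
  if pB s b is Some r0 then r0 |: Pset b else Pset b.
Definition qsel (b : B) : option R :=
  if Pset b == set0 then None else ohead [seq r <- prefB b | r \in Qset b].
Definition changes (b : B) : bool := (qsel b != None) && (qsel b != pB s b).
Definition newpB (b : B) : option R := if changes b then qsel b else pB s b.
Definition acceptMsg (b : B) (r : R) : bool := changes b && (qsel b == Some r).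
Definition breakMsg (b : B) (r : R) : bool := changes b && (pB s b == Some r).
Definition rejectMsg (b : B) (r : R) : bool :=
  (Pset b != set0) && (r \in Pset b) && (qsel b != Some r).

Definition pR1 (r : R) : option B :=
  if cR s r is Some b then (if acceptMsg b r then Some b else pR s r) else pR s r.
Definition C1 (r : R) : seq B :=
  if cR s r is Some b then (if rejectMsg b r then rem b (C s r) else C s r) else C s r.
Definition brk2 (r : R) : bool :=
  if pR1 r is Some b then breakMsg b r else false.
Definition C2 (r : R) : seq B :=
  if pR1 r is Some b then (if breakMsg b r then rem b (C1 r) else C1 r) else C1 r.
Definition pR2 (r : R) : option B := if brk2 r then None else pR1 r.
Definition cR3 (r : R) : option B :=
  if pR2 r is None then ohead (C2 r) else None.

Definition step : state := State newpB C2 cR3 pR2.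
End Round.

(* state at the end of round i (round 0 = initial state) *)
Definition st (i : nat) : state := iter i step init.

Definition lost_in (j : nat) : {set R * B} :=
  [set e : R * B | (e.2 \in C (st j.-1) e.1) && (e.2 \notin C (st j) e.1)].
Definition Lset (i : nat) : {set R * B} := \bigcup_(1 <= j < i.+1) lost_in j.

Definition wset (w : R -> B -> nat) (F : {set R * B}) : nat :=
  \sum_(e in F) w e.1 e.2.

Definition f (w : R -> B -> nat) (i : nat) (r : R) : nat :=
  if pR (st i) r is Some _ then 0
  else if C (st i) r is b :: _ then w r b else 0.
Definition fR (w : R -> B -> nat) (i : nat) : nat := \sum_(r : R) f w i r.

End GS.

(* Main.v *)
Require Import Defs.
From mathcomp Require Import all_boot all_order.
Set Implicit Arguments. Unset Strict Implicit.

Lemma idx_sub (T : eqType) (c b : T) t (p : seq T) :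
  uniq p -> subseq [:: c, b & t] p -> index c p < index b p.
Proof.
elim: p => [|x p IH] //= /andP[xp up].
case: eqP => [e|/eqP cx].
  subst x; move=> sb. have bp : b \in p by apply: (mem_subseq sb); rewrite mem_head.
  have bc : (c == b) = false by apply/negbTE; apply: contraNneq xp => ->.
  by rewrite eqxx bc.
move=> sb. have bp : b \in p by apply: (mem_subseq sb); rewrite !inE eqxx orbT.
have xb : (x == b) = false by apply/negbTE; apply: contraNneq xp => ->.
by rewrite eq_sym (negbTE cx) xb; apply: IH.
Qed.

Section P.
Variables (R B : finType) (prefR : R -> seq B) (prefB : B -> seq R).

Definition Inv (s : state R B) : Prop :=
 (forall r, subseq (C s r) (prefR r)) /\
 (forall r b, pR s r = Some b -> cR s r = None /\ ohead (C s r) = Some b) /\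
 (forall r b, cR s r = Some b -> pR s r = None /\ ohead (C s r) = Some b) /\
 (forall b r, pB s b = Some r -> pR s r = Some b).

Lemma acc_rej s b r : acceptMsg prefB s b r -> rejectMsg prefB s b r = false.
Proof. by rewrite /acceptMsg /rejectMsg => /andP[_ /eqP ->]; rewrite eqxx !andbF. Qed.

Lemma qsel_in s b r : qsel prefB s b = Some r -> r \in Qset s b.
Proof.
rewrite /qsel; case: ifP => // _.
case E: [seq _ <- _ | _] => [|x l] //= [<-].
have : x \in [seq r0 <- prefB b | r0 \in Qset s b] by rewrite E mem_head.
by rewrite mem_filter => /andP[].
Qed.

Lemma C2_sub s r : subseq (C2 prefB s r) (C s r).
Proof.
have sub1 : subseq (C1 prefB s r) (C s r).
  rewrite /C1; case: (cR s r) => [c|]; last exact: subseq_refl.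
  case: ifP => _; [exact: rem_subseq | exact: subseq_refl].
rewrite /C2; case: (pR1 prefB s r) => [b|]; last exact: sub1.
case: ifP => _; last exact: sub1.
exact: subseq_trans (rem_subseq _ _) sub1.
Qed.

Lemma step_inv s : Inv s -> Inv (step prefB s).
Proof.
move=> [Hsub [HpR [HcR HpB]]].
split; [|split; [|split]] => /=.
- by move=> r; apply: subseq_trans (C2_sub s r) (Hsub r).
- move=> r b; rewrite /cR3 /pR2 /brk2.
  case hp1: (pR1 prefB s r) => [b'|] //.
  case hbr: breakMsg; first by []. move=> [<-]; split => //.
  rewrite /C2 hp1 hbr. move: hp1; rewrite /pR1 /C1.
  case hc: (cR s r) => [c|].
  + case: (HcR r c hc) => hpn hoc.
    case ha: acceptMsg; last by rewrite hpn.
    by move=> [<-]; rewrite (acc_rej ha).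
  + by move=> hp; case: (HpR r b' hp).
- move=> r b; rewrite /cR3; case: (pR2 prefB s r) => // ho; split => //.
- move=> b r; rewrite /newpB.
  case hch: (changes prefB s b).
  + move=> hq.
    have hacc : acceptMsg prefB s b r by rewrite /acceptMsg hch hq eqxx.
    case hc: (cR s r == Some b).
    * move/eqP: hc => hc.
      case: (HcR r b hc) => hpn _.
      have hp1 : pR1 prefB s r = Some b by rewrite /pR1 hc hacc.
      rewrite /pR2 /brk2 hp1 /breakMsg.
      case hpb: (pB s b == Some r); last by rewrite andbF.
      by move/eqP: hpb => /HpB; rewrite hpn.
    * have := qsel_in hq; rewrite /Qset.
      have hnP : r \notin Pset s b by rewrite inE hc.
      case hpb: (pB s b) => [r0|]; last by rewrite (negbTE hnP).
      rewrite in_setU1 (negbTE hnP) orbF => /eqP hr.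
      by move: hch; rewrite /changes hq hpb hr eqxx andbF.
  + move=> hpb; have hp := HpB _ _ hpb.
    case: (HpR r b hp) => hc _.
    have hp1 : pR1 prefB s r = Some b by rewrite /pR1 hc.
    by rewrite /pR2 /brk2 hp1 /breakMsg hch.
Qed.


Definition fval (w : R -> B -> nat) (s : state R B) r :=
  if pR s r is Some _ then 0 else if C s r is b :: _ then w r b else 0.

Lemma key s w r : Inv s -> (forall r, pR s r = None -> cR s r = ohead (C s r)) ->
  (forall r, uniq (prefR r)) ->
  (forall r b1 b2, prefersR prefR r b1 b2 -> w r b2 <= w r b1) ->
  fval w (step prefB s) r = 0 \/
  exists c, [&& c \in C s r & c \notin C (step prefB s) r] /\ fval w (step prefB s) r <= w r c.
Proof.
move=> [Hsub [HpR [HcR HpB]]] Hnone Hu Hwm.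
set s' := step prefB s.
have gen : forall c t, C s r = c :: t -> C s' r = t -> fval w s' r = 0 \/
  exists c, [&& c \in C s r & c \notin C s' r] /\ fval w s' r <= w r c.
  move=> c t hC hC'.
  have sb := Hsub r; rewrite hC in sb.
  have ut : uniq (c :: t) := subseq_uniq sb (Hu r).
  rewrite /fval; case: (pR s' r) => [_|]; first by left.
  rewrite hC'; case: t hC hC' sb ut => [|b' t'] hC hC' sb ut; first by left.
  right; exists c; split.
    by rewrite hC mem_head /=; case/andP: ut.
  apply: Hwm; rewrite /prefersR.
  rewrite (mem_subseq sb) ?mem_head // (mem_subseq sb) ?inE ?eqxx ?orbT //=.
  exact: idx_sub (Hu r) sb.
have rem1 : forall c t, rem c (c :: t) = t by move=> c t /=; rewrite eqxx.
case hp: (pR s r) => [b|].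
  case: (HpR r b hp) => hc.
  case hC: (C s r) => [|b0 t] //= [eb]; subst b0.
  have hp1 : pR1 prefB s r = Some b by rewrite /pR1 hc.
  case hbr: (breakMsg prefB s b r).
    move: (gen b t hC); rewrite hC; apply.
    by rewrite /s' /= /C2 hp1 hbr /C1 hc hC rem1.
  by left; rewrite /fval /s' /= /pR2 /brk2 hp1 hbr.
have hc := Hnone r hp.
case hC: (C s r) => [|c t]; rewrite hC /= in hc.
  left; rewrite /fval /s' /= /pR2 /brk2 /C2.
  have hp1 : pR1 prefB s r = None by rewrite /pR1 hc.
  by rewrite hp1 /C1 hc hC.
case ha: (acceptMsg prefB s c r).
  have hp1 : pR1 prefB s r = Some c by rewrite /pR1 hc ha.
  case hbr: (breakMsg prefB s c r).
    move: (gen c t hC); rewrite hC; apply.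
    by rewrite /s' /= /C2 hp1 hbr /C1 hc (acc_rej ha) hC rem1.
  by left; rewrite /fval /s' /= /pR2 /brk2 hp1 hbr.
have hp1 : pR1 prefB s r = None by rewrite /pR1 hc ha.
case hrj: (rejectMsg prefB s c r).
  move: (gen c t hC); rewrite hC; apply.
  by rewrite /s' /= /C2 hp1 /C1 hc hrj hC rem1.
exfalso.
have rP : r \in Pset s c by rewrite inE hc.
have nz : Pset s c != set0 by apply/set0Pn; exists r.
move: hrj; rewrite /rejectMsg nz rP /= => /negbFE /eqP hq.
move: ha; rewrite /acceptMsg hq eqxx andbT /changes /= => /negbT.
rewrite hq /= negbK => /eqP hpb.
by move: (HpB c r (esym hpb)); rewrite hp.
Qed.

End P.

Lemma st_inv (R B : finType) (prefR : R -> seq B) (prefB : B -> seq R) n :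
  Inv prefR (st prefR prefB n).
Proof.
elim: n => [|n IH].
  split; [|split; [|split]] => //= r; exact: subseq_refl.
exact: (@step_inv R B prefR prefB _ IH).
Qed.

Lemma st_mono (R B : finType) (prefR : R -> seq B) (prefB : B -> seq R) j n r x :
  x \in C (st prefR prefB (j + n)) r -> x \in C (st prefR prefB j) r.
Proof.
elim: n => [|n IH]; first by rewrite addn0.
rewrite addnS => hx; apply: IH.
exact: (mem_subseq (@C2_sub R B prefB _ r)).
Qed.

Theorem lemma2 (R B : finType) (adj : R -> B -> bool)
    (prefR : R -> seq B) (prefB : B -> seq R) (w : R -> B -> nat)
    (Hpref : pref_ok adj prefR prefB) (Hiso : no_isolated adj)
    (Hw : weight_ok adj prefR prefB w) (i : nat) (hi : 2 <= i) :
  fR prefR prefB w i <= wset w (Lset prefR prefB i) - wset w (Lset prefR prefB i.-1).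
Proof.
have Hu : forall r, uniq (prefR r) by move=> r; case: (Hpref.1 r).
have Hwm := Hw.2.1.
move: hi; case: i => [|[|k]] // _.
have Hnone : forall r, pR (st prefR prefB k.+1) r = None ->
    cR (st prefR prefB k.+1) r = ohead (C (st prefR prefB k.+1) r).
  by move=> r /= hp; rewrite /cR3 hp.
have disj : [disjoint Lset prefR prefB k.+1 & lost_in prefR prefB k.+2].
  rewrite -setI_eq0; apply/eqP/setP => e; rewrite !inE.
  apply/negbTE; apply/negP => /andP[he he2].
  move: he2 => /andP[hin _].
  move: e he hin; rewrite /Lset big_seq_cond.
  apply: (big_ind (fun A : {set R * B} => forall e, e \in A ->
     e.2 \in C (st prefR prefB k.+1) e.1 -> False)).
  - by move=> e; rewrite inE.
  - by move=> A1 A2 h1 h2 e; rewrite in_setU => /orP[/h1|/h2].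
  - move=> j; rewrite mem_index_iota andbT => /andP[j1 j2] e.
    rewrite inE => /andP[_ hn] hin.
    have : k.+1 = j + (k.+1 - j) by rewrite subnKC // -ltnS.
    move=> eq; rewrite eq in hin.
    by move: (st_mono hin); rewrite (negbTE hn).
have -> : Lset prefR prefB k.+2 = Lset prefR prefB k.+1 :|: lost_in prefR prefB k.+2.
  by rewrite /Lset big_nat_recr.
have -> : wset w (Lset prefR prefB k.+1 :|: lost_in prefR prefB k.+2) =
    wset w (Lset prefR prefB k.+1) + wset w (lost_in prefR prefB k.+2).
  rewrite /wset (eq_bigl [predU Lset prefR prefB k.+1 & lost_in prefR prefB k.+2]);
    last by move=> e; rewrite !inE.
  by rewrite bigU.
rewrite /= addKn /fR /wset (partition_big (fun e : R * B => e.1) predT) //=.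
apply: leq_sum => r _.
have := @key R B prefR prefB (st prefR prefB k.+1) w r (st_inv _ _ _) Hnone Hu Hwm.
change (f prefR prefB w k.+2 r) with (fval w (step prefB (st prefR prefB k.+1)) r).
case=> [-> //| [c [hc hle]]].
rewrite (bigD1 (r, c)) /=; first exact: leq_trans hle (leq_addr _ _).
by rewrite eqxx andbT inE.
Qed.
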